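(* Let $\ell\in\{\tfrac12,\tfrac32,\tfrac52,\dots\}$ and let $\tau^\ell$ be the $(2\ell+1)\times(2\ell+1)$ matrix defined in the context. Then: (a) $\tau^\ell$ is invertible; (b) $|\tau^\ell_{-\ell,-\ell}|<1$ and $|\tau^\ell_{\ell,\ell}|<1$; (c) Let $v\in\mathbb{C}^{2\ell+1}$ (coordinates indexed by $-\ell,-\ell+1,\dots,\ell$) be supported either on $\{-\ell,\dots,-\tfrac12\}$ or on $\{\tfrac12,\dots,\ell\}$, and suppose $\tau^\ell v$ is supported either on $\{n: n+\ell\text{ even}\}$ or on $\{n: n+\ell\text{ odd}\}$. Then $v=0$ (and hence $\tau^\ell v=0$).
   Context: For $\ell\in\{\tfrac12,1,\tfrac32,2,\dots\}$ and $m,n\in\{-\ell,-\ell+1,\dots,\ell\}$, define $$\tau^\ell_{m,n}=\sqrt{\frac{(\ell-m)!(\ell+m)!}{(\ell-n)!(\ell+n)!}}\;\frac{i^{2\ell}}{2^\ell}\int_{|z|=1}(z+1)^{\ell-n}(z-1)^{\ell+n}z^{m-\ell}\,\frac{dz}{2\pi i z},$$ i.e. the prefactor times the coefficient of $z^{\ell-m}$ in the polynomial $(z+1)^{\ell-n}(z-1)^{\ell+n}$. The matrix $\tau^\ell=(\tau^\ell_{m,n})$, rows indexed by $m$ and columns by $n$ in increasing order from $-\ell$ to $\ell$, is the matrix of the spin-$\ell$ irreducible representation of $SU(2)$ evaluated at $\frac{1}{\sqrt2}\begin{pmatrix} i & i\\ i & -i\end{pmatrix}$, and is unitary. *)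

(* Defs.v *)
From HB Require Import structures.
From mathcomp Require Import all_boot all_order all_algebra all_field.
Set Implicit Arguments. Unset Strict Implicit. Unset Printing Implicit Defensive.
Import Order.TTheory GRing.Theory Num.Theory.
Local Open Scope ring_scope.

(* We write L = 2*ell (a nat). Row index a : 'I_(L+1) encodes m = a - ell,
   column index b encodes n = b - ell; so ell - m = L - a, ell + m = a,
   ell - n = L - b, ell + n = b.  2^ell = (sqrt 2)^(2 ell).
   tau_{m,n} = sqrt((ell-m)!(ell+m)!/((ell-n)!(ell+n)!)) * i^(2ell)/2^ell *
              [coefficient of z^(ell-m) in (z+1)^(ell-n) (z-1)^(ell+n)]. *)
Definition tau (L : nat) : 'M[algC]_(L.+1) :=
  \matrix_(a < L.+1, b < L.+1)
    (sqrtC (((L - a)`!)%:R * (a`!)%:R / (((L - b)`!)%:R * (b`!)%:R))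
     * 'i ^+ L / (sqrtC 2) ^+ L
     * ((('X + 1) ^+ (L - b) * ('X - 1) ^+ b : {poly algC})`_(L - a))).

(* Main.v *)
Require Import Defs.
From HB Require Import structures.
From mathcomp Require Import all_boot all_order all_algebra all_field.
From mathcomp Require Import zify ring lra.
Import Order.TTheory GRing.Theory Num.Theory.
Local Open Scope ring_scope.

Definition E (L b : nat) : {poly algC} := ('X + 1) ^+ (L - b) * ('X - 1) ^+ b.

Lemma indep L (w : nat -> algC) :
  \sum_(b < L.+1) w b *: E L b = 0 -> forall b, (b <= L)%N -> w b = 0.
Proof.
elim: L w => [|L IH] w H b Hb.
  move: Hb; rewrite leqn0 => /eqP ->.
  move: H; rewrite big_ord1 /E !expr0 mulr1 => H.
  have := congr1 (fun p : {poly algC} => p`_0) H.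
  by rewrite /= coefZ coef1 mulr1 coef0.
move: H; rewrite big_ord_recl /=.
set S := \sum_(i < L.+1) _.
have HS : S = ('X - 1) * \sum_(i < L.+1) w i.+1 *: E L i.
  rewrite /S mulr_sumr; apply: eq_bigr => i _.
  by rewrite /E /= /bump add1n subSS exprS -!scalerAr mulrCA.
rewrite HS /E subn0 expr0 mulr1 => H.
have w0 : w 0%N = 0.
  have := congr1 (fun p : {poly algC} => p.[1]) H => /=.
  rewrite !hornerE subrr mul0r addr0 => /eqP; rewrite mulf_eq0 => /orP[/eqP //|].
  by rewrite expf_eq0 andbC (_ : 1 + 1 = 2%:R) // pnatr_eq0.
case: b Hb => [//|b] Hb.
apply: (IH (fun i => w i.+1)) => //.
move: H; rewrite w0 scale0r add0r => /eqP; rewrite mulf_eq0 => /orP[|/eqP //].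
by rewrite -polyC1 polyXsubC_eq0.
Qed.

Lemma Po_sym (P : {poly algC}) s :
  (forall i, (-1) ^+ i * P`_i = s * P`_i) -> P \Po (- 'X) = s *: P.
Proof.
move=> H.
rewrite comp_polyE -[X in _ = _ *: X]coefK poly_def scaler_sumr.
apply: eq_bigr => i _.
by rewrite -scaleN1r exprZn scalerA mulrC H scalerA.
Qed.

Lemma Gl (a : algC) (n : nat) (s : algC) (P : {poly algC}) :
  a != 0 -> s != 0 -> P \Po (- 'X) = s *: P ->
  ('X - a%:P) ^+ n %| P -> (size P <= n.*2)%N -> P = 0.
Proof.
move=> a0 s0 HP Hd Hs.
have h1 := dvdp_comp_poly (- 'X) Hd.
rewrite HP dvdpZr // rmorphXn /= comp_polyB comp_polyX comp_polyC in h1.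
have e : - 'X - a%:P = (-1) *: ('X - (- a)%:P).
  by rewrite scaleN1r polyCN opprB addrC.
rewrite e exprZn dvdpZl ?expf_neq0 ?oppr_eq0 ?oner_eq0 // in h1.
have cop : coprimep (('X - a%:P) ^+ n) (('X - (- a)%:P) ^+ n).
  apply/coprimep_expl/coprimep_expr/coprimep_XsubC2.
  rewrite -opprD oppr_eq0 -mulr2n mulrn_eq0 negb_or /=; exact: a0.
have h2 : ('X - a%:P) ^+ n * ('X - (- a)%:P) ^+ n %| P.
  by rewrite Gauss_dvdp // Hd h1.
apply/eqP; apply/negPn/negP => P0.
have := dvdp_leq P0 h2.
rewrite size_mul ?expf_neq0 ?polyXsubC_eq0 // !size_exp_XsubC.
rewrite addnS /= => h; move: Hs; rewrite -addnn => /(leq_trans h); by rewrite addSn ltnn.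
Qed.

Definition r (L a : nat) : algC := ((L - a)`!)%:R * (a`!)%:R.
Definition cst (L : nat) : algC := 'i ^+ L / sqrtC 2 ^+ L.
Definition Pv L (v : 'cV[algC]_(L.+1)) : {poly algC} :=
  \sum_(b < L.+1) (v b ord0 / sqrtC (r L b)) *: E L b.

Lemma r_gt0 L a : 0 < r L a.
Proof. by rewrite /r mulr_gt0 // ltr0n fact_gt0. Qed.

Lemma sr_neq0 L a : sqrtC (r L a) != 0.
Proof. by rewrite sqrtC_eq0 gt_eqF // r_gt0. Qed.

Lemma sqrt2_neq0 : sqrtC 2 != 0 :> algC.
Proof. by rewrite sqrtC_eq0 pnatr_eq0. Qed.

Lemma cst_neq0 L : cst L != 0.
Proof. by rewrite /cst mulf_neq0 ?invr_eq0 ?expf_neq0 ?neq0Ci ?sqrt2_neq0. Qed.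

Lemma sqrtC_div (x y : algC) : 0 <= x -> 0 < y -> sqrtC (x / y) = sqrtC x / sqrtC y.
Proof.
move=> hx hy.
have hy0 : sqrtC y != 0 by rewrite sqrtC_eq0 gt_eqF.
apply: (mulIf hy0); rewrite divfK // -sqrtCM ?divfK ?gt_eqF //.
by rewrite nnegrE divr_ge0 // ltW.
by rewrite nnegrE ltW.
Qed.

Lemma tauE L (a b : 'I_L.+1) :
  tau L a b = cst L * (sqrtC (r L a) / sqrtC (r L b)) * (E L b)`_(L - a).
Proof.
rewrite mxE sqrtC_div ?ltW ?r_gt0 // /cst /E /r.
ring.
Qed.

Lemma tau_mul L (v : 'cV[algC]_(L.+1)) (j : 'I_L.+1) :
  (tau L *m v) j ord0 = cst L * sqrtC (r L j) * (Pv L v)`_(L - j).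
Proof.
rewrite mxE /Pv coef_sum mulr_sumr; apply: eq_bigr => b _.
rewrite tauE coefZ; ring.
Qed.

Lemma XaddE : ('X + 1 : {poly algC}) = 'X - (-1)%:P.
Proof. by rewrite polyCN opprK polyC1. Qed.
Lemma XsubE : ('X - 1 : {poly algC}) = 'X - 1%:P.
Proof. by rewrite polyC1. Qed.

Lemma size_E L b : (b <= L)%N -> (size (E L b) <= L.+1)%N.
Proof.
move=> hb; apply: leq_trans (size_polyMleq _ _) _.
rewrite /E XaddE XsubE !size_exp_XsubC addSn /=; lia.
Qed.

Lemma size_Pv L v : (size (Pv L v) <= L.+1)%N.
Proof.
apply: (big_ind (fun p : {poly algC} => (size p <= L.+1)%N)).
- by rewrite size_poly0.
- move=> p q hp hq; apply: leq_trans (size_polyD _ _) _; by rewrite geq_max hp hq.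
- move=> b _; apply: leq_trans (size_scale_leq _ _) _; apply: size_E.
  by rewrite -ltnS ltn_ord.
Qed.

Lemma Pv_eq0 L v : Pv L v = 0 -> v = 0.
Proof.
move=> H.
pose w := fun b : nat => if (b < L.+1)%N then v (inord b) ord0 / sqrtC (r L b) else 0.
have Hw : \sum_(b < L.+1) w b *: E L b = 0.
  rewrite -[RHS]H /Pv; apply: eq_bigr => b _; by rewrite /w ltn_ord inord_val.
apply/matrixP => i j; rewrite (ord1 j) mxE.
have := @indep _ _ Hw i; rewrite -ltnS ltn_ord => /(_ isT).
rewrite /w ltn_ord inord_val => /eqP; rewrite mulf_eq0 invr_eq0 (negbTE (sr_neq0 _ _)) orbF.
by move/eqP.
Qed.

Lemma coef_from_tau L v (j : 'I_L.+1) :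
  (tau L *m v) j ord0 = 0 -> (Pv L v)`_(L - j) = 0.
Proof.
rewrite tau_mul -mulrA => /eqP; rewrite mulf_eq0 (negbTE (cst_neq0 _)) mulf_eq0 (negbTE (sr_neq0 _ _)) /=.
by move/eqP.
Qed.

Lemma coef_from_tau' L v i :
  (i <= L)%N -> (tau L *m v) (inord (L - i)) ord0 = 0 -> (Pv L v)`_i = 0.
Proof.
move=> hi /coef_from_tau; rewrite inordK ?subKn //; lia.
Qed.

Lemma Pv_zero L v : (forall j, (tau L *m v) j ord0 = 0) -> Pv L v = 0.
Proof.
move=> H; apply/polyP => i; rewrite coef0.
case: (ltnP i L.+1) => hi.
  by apply: coef_from_tau' => //; apply: H.
by apply: nth_default; apply: leq_trans (size_Pv _ _) hi.
Qed.

Lemma norm_cst L : (0 < L)%N -> `|cst L| < 1.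
Proof.
move=> hL.
have s2 : 0 < sqrtC 2 :> algC by rewrite lt_def sqrt2_neq0 sqrtC_ge0 ler0n.
rewrite /cst normrM normrV ?unitfE ?expf_neq0 ?sqrt2_neq0 // !normrX normCi expr1n mul1r.
rewrite ger0_norm ?ltW // invf_lt1 ?exprn_gt0 // exprn_egt1 -?lt0n //.
by rewrite -[X in X < _]sqrtC1 ltr_sqrtC ?nnegrE ?ler01 ?ler0n // ltr1n.
Qed.

Lemma sym_of L v (par : bool) : odd L ->
  (forall j : 'I_L.+1, odd j = par -> (tau L *m v) j ord0 = 0) ->
  forall i, (-1) ^+ i * (Pv L v)`_i = (if par then -1 else 1) * (Pv L v)`_i.
Proof.
move=> oL H i.
case: (ltnP L i) => hi.
  by rewrite nth_default ?mulr0 //; apply: leq_trans (size_Pv _ _) hi.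
have hoL : odd (L - i) = ~~ odd i by rewrite oddB // oL.
case: (eqVneq (odd (L - i)) par) => e.
  rewrite coef_from_tau' ?mulr0 //; apply: H; rewrite inordK; [exact: e | lia].
have oi : odd i = par by clear H; move: e; rewrite hoL; case: (odd i); case: par.
by rewrite -signr_odd oi; clear H e oi; case: par.
Qed.

Lemma dvd_P L (v : 'cV[algC]_(L.+1)) (d : {poly algC}) :
  (forall b : 'I_L.+1, v b ord0 != 0 -> d %| E L b) -> d %| Pv L v.
Proof.
move=> H; apply: (big_ind (fun p => d %| p)).
- exact: dvdp0.
- by move=> p q; apply: dvdp_add.
- move=> b _; case: (eqVneq (v b ord0) 0) => e.
    by rewrite e mul0r scale0r dvdp0.
  by rewrite -mul_polyC dvdp_mull // H.
Qed.

Theorem mainTheorem10 (k : nat) :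
  [/\ tau k.*2.+1 \in unitmx,
      `|tau k.*2.+1 ord0 ord0| < 1 /\ `|tau k.*2.+1 ord_max ord_max| < 1
    & forall v : 'cV[algC]_(k.*2.+2),
        ((forall j : 'I_(k.*2.+2), (k < j)%N -> v j ord0 = 0) \/
         (forall j : 'I_(k.*2.+2), (j <= k)%N -> v j ord0 = 0)) ->
        ((forall j : 'I_(k.*2.+2), odd j -> (tau k.*2.+1 *m v) j ord0 = 0) \/
         (forall j : 'I_(k.*2.+2), ~~ odd j -> (tau k.*2.+1 *m v) j ord0 = 0)) ->
        v = 0].
Proof.
have hL : (0 < k.*2.+1)%N by [].
split.
- rewrite -unitmx_tr unitmxE unitfE; apply/negP => /det0P [u u0 Hu].
  have Hv : tau k.*2.+1 *m u^T = 0 by rewrite -(trmxK (tau _)) -trmx_mul Hu trmx0.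
  have := @Pv_eq0 _ _ (@Pv_zero _ u^T (fun j => ltac:(by rewrite Hv mxE))).
  move/(congr1 trmx); rewrite trmxK trmx0 => u0'.
  by rewrite u0' eqxx in u0.
- split.
  + rewrite tauE /= subn0 divff ?sr_neq0 // mulr1 normrM.
    have -> : (E k.*2.+1 0)`_k.*2.+1 = 1.
      have := monic_exp k.*2.+1 (monicXsubC (-1 : algC)).
      move/monicP; rewrite /lead_coef size_exp_XsubC /= /E subn0 expr0 mulr1 XaddE.
      done.
    by rewrite normr1 mulr1 norm_cst.
  + rewrite tauE /= subnn divff ?sr_neq0 // mulr1 normrM.
    have -> : (E k.*2.+1 k.*2.+1)`_0 = (-1) ^+ k.*2.+1.
      by rewrite -horner_coef0 /E subnn expr0 mul1r !hornerE.
    by rewrite normrX normrN1 expr1n mulr1 norm_cst.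
- move=> v Hs Hp; apply: Pv_eq0.
  have oL : odd k.*2.+1 by rewrite /= odd_double.
  have [s s0 Hsym] : exists2 s : algC, s != 0 &
      forall i, (-1) ^+ i * (Pv _ v)`_i = s * (Pv _ v)`_i.
    case: Hp => Hp.
      exists (-1); first by rewrite oppr_eq0 oner_eq0.
      by apply: (@sym_of _ v true) => // j hj; apply: Hp; rewrite hj.
    exists 1; first by rewrite oner_eq0.
    by apply: (@sym_of _ v false) => // j hj; apply: Hp; rewrite hj.
  have HP := Po_sym _ _ Hsym.
  have Hsz : (size (Pv _ v) <= k.+1.*2)%N by rewrite doubleS; exact: size_Pv.
  case: Hs => Hs.
    apply: (@Gl (-1) k.+1 s) => //; first by rewrite oppr_eq0 oner_eq0.
    apply: dvd_P => b hb.
    have hbk : (b <= k)%N by rewrite leqNgt; apply/negP => /Hs; apply/eqP.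
    rewrite /E XaddE; apply: dvdp_mulr; apply: dvdp_exp2l.
    move: hbk; case: b {hb} => /= c _ hc; rewrite -addnn; lia.
  apply: (@Gl 1 k.+1 s) => //; first by rewrite oner_eq0.
  apply: dvd_P => b hb.
  have hbk : (k < b)%N by rewrite ltnNge; apply/negP => /Hs; apply/eqP.
  rewrite /E XsubE; apply: dvdp_mull; exact: dvdp_exp2l.
Qed.
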